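(* For every $k\ge 0$, as formal power series in $z$, $$\sum_{n\ge 0} e(n,n-k)z^n=\frac{z^k}{(1-z)^{2\lfloor\frac{k+1}{2}\rfloor+1}(1+z^2)^{\lfloor\frac{k}{2}\rfloor+1}}\,L_{k+2}(-z).$$
   Context: $e(n,j)$ is the number of $j$-element subsets of $\{1,\dots,n\}$ with even sum (the empty set counts as even; $e(n,j)=0$ for $j<0$). Losanitsch's triangle $(L(n,k))$ is defined by $L(0,k)=[k=0]$, $L(1,k)=[k\le 1]$ for $k\ge0$, $L(n,k)=0$ for $k<0$, and for $n\ge 2$: $L(n,k)=L(n-2,k)+\binom{n-2}{k-1}+L(n-2,k-2)$ (with $\binom{m}{j}=0$ for $j<0$ or $j>m$). The Losanitsch polynomials are $L_n(x)=\sum_{k=0}^n L(n,k)x^k$. *)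

(* Defs.v *)
From HB Require Import structures.
From mathcomp Require Import all_boot all_order all_algebra.
Set Implicit Arguments. Unset Strict Implicit. Unset Printing Implicit Defensive.
Import Order.TTheory GRing.Theory Num.Theory.
Local Open Scope ring_scope.

(* e(n,j): number of j-element subsets of {1,...,n} with even sum.
   The element i : 'I_n represents the integer i+1. e(n,j) = 0 for j < 0. *)
Definition e_even (n : nat) (j : int) : nat :=
  match j with
  | Posz j' => #|[set A : {set 'I_n} |
                   (#|A| == j')%N && ~~ odd (\sum_(i in A) i.+1)%N]|
  | Negz _ => 0%N
  end.

Fixpoint Los (n k : nat) {struct n} : nat :=
  match n with
  | 0 => nat_of_bool (k == 0)%N
  | 1 => nat_of_bool (k <= 1)%N
  | n'.+2 => (Los n' k
              + (if k is k'.+1 then 'C(n', k') else 0)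
              + (if k is k'.+2 then Los n' k' else 0))%N
  end.

Definition LosPoly (n : nat) : {poly rat} :=
  \sum_(k < n.+1) (Los n k)%:R *: 'X^k.

Definition fps := nat -> rat.

Definition fps_of_poly (p : {poly rat}) : fps := fun n => p`_n.

Definition fps_mul (f g : fps) : fps :=
  fun n => \sum_(i < n.+1) f i * g (n - i)%N.

(* The first n+1 coefficients of the multiplicative inverse of f
   (meaningful when f 0 != 0). *)
Fixpoint inv_seq (f : fps) (n : nat) : seq rat :=
  match n with
  | 0 => [:: (f 0%N)^-1]
  | m.+1 => let s := inv_seq f m in
            rcons s (- (f 0%N)^-1 * \sum_(i < m.+1) f i.+1 * nth 0 s (m - i)%N)
  end.

Definition fps_inv (f : fps) : fps := fun n => nth 0 (inv_seq f n) n.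

(* Main.v *)
Require Import Defs.
From HB Require Import structures.
From mathcomp Require Import all_boot all_order all_algebra.
From mathcomp Require Import ring zify.
From Stdlib Require Import FunctionalExtensionality.
Import Order.TTheory GRing.Theory Num.Theory.
Local Open Scope ring_scope.
Set Implicit Arguments. Unset Strict Implicit. Unset Printing Implicit Defensive.

Definition Tr (N : nat) (f : fps) : {poly rat} := \poly_(i < N.+1) f i.
Definition eqm (N : nat) (p q : {poly rat}) := forall j, (j <= N)%N -> p`_j = q`_j.

Lemma eqm_refl N p : eqm N p p. Proof. by []. Qed.
Lemma eqm_sym N p q : eqm N p q -> eqm N q p.
Proof. by move=> h j hj; rewrite h. Qed.
Lemma eqm_trans N p q r : eqm N p q -> eqm N q r -> eqm N p r.
Proof. by move=> h1 h2 j hj; rewrite h1 ?h2. Qed.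
Lemma eqm_mul N p p' q q' : eqm N p p' -> eqm N q q' -> eqm N (p * q) (p' * q').
Proof.
move=> hp hq j hj; rewrite !coefM; apply: eq_bigr => i _.
have hi := ltn_ord i.
rewrite hp ?hq //; lia.
Qed.
Lemma eqm_add N p p' q q' : eqm N p p' -> eqm N q q' -> eqm N (p + q) (p' + q').
Proof. by move=> hp hq j hj; rewrite !coefD hp ?hq. Qed.
Lemma eqm_eq N p q : p = q -> eqm N p q.
Proof. by move=> ->. Qed.

Lemma Tr_coef N f j : (j <= N)%N -> (Tr N f)`_j = f j.
Proof. by move=> hj; rewrite coef_poly ltnS hj. Qed.

Lemma fps_mulT N f g j : (j <= N)%N -> fps_mul f g j = (Tr N f * Tr N g)`_j.
Proof.
move=> hj; rewrite coefM /fps_mul; apply: eq_bigr => i _.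
have hi := ltn_ord i.
rewrite !Tr_coef //; lia.
Qed.

Lemma Tr_mul N f g : eqm N (Tr N (fps_mul f g)) (Tr N f * Tr N g).
Proof. by move=> j hj; rewrite Tr_coef // (@fps_mulT N). Qed.

Lemma Tr_poly N p : eqm N (Tr N (fps_of_poly p)) p.
Proof. by move=> j hj; rewrite Tr_coef. Qed.

Lemma size_inv_seq f m : size (inv_seq f m) = m.+1.
Proof. by elim: m => // m IH; rewrite [inv_seq _ _]/= size_rcons IH. Qed.

Lemma inv_seq_nth f m i : (i <= m)%N -> nth 0 (inv_seq f m) i = fps_inv f i.
Proof.
elim: m i => [|m IH] i hi.
  by move: hi; rewrite leqn0 => /eqP ->.
move: hi; rewrite leq_eqVlt => /orP [/eqP -> //|hi].
by rewrite /= nth_rcons size_inv_seq hi IH.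
Qed.

Lemma fps_inv_S f m : fps_inv f m.+1 =
  - (f 0%N)^-1 * \sum_(i < m.+1) f i.+1 * fps_inv f (m - i)%N.
Proof.
rewrite {1}/fps_inv /= nth_rcons size_inv_seq ltnn eqxx.
congr (_ * _); apply: eq_bigr => i _; rewrite inv_seq_nth ?leq_subr //.
Qed.

Lemma fps_mul_inv f j : f 0%N != 0 -> fps_mul f (fps_inv f) j = (j == 0%N)%:R.
Proof.
move=> hf; case: j => [|m].
  by rewrite /fps_mul big_ord1 /fps_inv /= mulfV.
rewrite /fps_mul big_ord_recl subn0 fps_inv_S mulrA mulrN mulfV // mulN1r.
have -> : \sum_(i < m.+1) f (bump 0 i) * fps_inv f (m.+1 - bump 0 i)%N =
          \sum_(i < m.+1) f i.+1 * fps_inv f (m - i)%N.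
  by apply: eq_bigr => i _; rewrite /bump /= add1n subSS.
by rewrite addNr.
Qed.

Lemma inv_eqm N (p : {poly rat}) : p`_0 != 0 -> eqm N (p * Tr N (fps_inv (fps_of_poly p))) 1.
Proof.
move=> hp j hj.
rewrite -(eqm_mul (@Tr_poly N p) (@eqm_refl N _) hj) -fps_mulT //.
by rewrite fps_mul_inv // coef1.
Qed.
Lemma prod_coef n (c : 'I_n -> rat) k :
  (\prod_(i < n) ('X + (c i)%:P))`_k =
  \sum_(J : {set 'I_n}) (\prod_(i in J) c i) * (k == n - #|J|)%N%:R.
Proof.
under eq_bigr do rewrite addrC.
rewrite bigA_distr coef_sum; apply: eq_bigr => J _.
rewrite (bigID (mem J)) /=.
have -> : \prod_(i | i \in J) (if i \in J then (c i)%:P else 'X) =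
          (\prod_(i in J) c i)%:P.
  by rewrite rmorph_prod; apply: eq_bigr => i ->.
have -> : \prod_(i | i \notin J) (if i \in J then (c i)%:P else 'X) =
          'X^(n - #|J|).
  rewrite (eq_bigr (fun _ => 'X)); last by move=> i /negbTE ->.
  rewrite prodr_const; congr (_ ^+ _).
  have h := cardC J; rewrite card_ord in h.
  have e : #|(fun i => i \notin J)| = #|[predC J]| by apply: eq_card.
  rewrite e; move: h; set a := #|[predC J]|; set b := #|J|; lia.
by rewrite coefCM coefXn.
Qed.

Definition Rp n : {poly rat} := \prod_(i < n) ('X + ((-1)^+(i.+1) : rat)%:P).
Definition Up n : {poly rat} := \prod_(i < n) ('X + (1 : rat)%:P).

Lemma card_set_sum (T : finType) (P : pred T) :
  (#|[set x | P x]|%:R : rat) = \sum_x (P x)%:R.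
Proof.
rewrite -sum1_card natr_sum big_mkcond /=; apply: eq_bigr => x _.
by rewrite inE; case: (P x).
Qed.

Lemma lhs_formula n k : ((e_even n (n%:Z - k%:Z))%:R : rat) =
  2^-1 * ((Up n)`_k + (Rp n)`_k).
Proof.
rewrite /Up /Rp !prod_coef.
case: (leqP k n) => hk; last first.
  have -> : n%:Z - k%:Z = Negz (k - n).-1 by rewrite NegzE; lia.
  rewrite /= !big1 ?addr0 ?mulr0 // => J _.
    have : (n - #|J| < k)%N by lia.
    by rewrite ltn_neqAle => /andP [/negbTE]; rewrite eq_sym => ->; rewrite mulr0.
  have : (n - #|J| < k)%N by lia.
  by rewrite ltn_neqAle => /andP [/negbTE]; rewrite eq_sym => ->; rewrite mulr0.
rewrite subzn // /e_even card_set_sum -big_split mulr_sumr; apply: eq_bigr => J _.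
rewrite prodrXr -signr_odd (eq_bigr (fun _ => 1)) // prodr_const expr1n mul1r.
have hJ : (#|J| <= n)%N by have := max_card J; rewrite card_ord.
have -> : (k == n - #|J|)%N = (#|J| == n - k)%N by apply/eqP/eqP; lia.
case: (#|J| == n - k)%N; case: (odd _) => /=; rewrite ?expr0 ?expr1.
all: rewrite ?mulr1 ?mulr0 ?addr0 ?subrr ?mulr0 ?mulN1r ?addrN ?mulr0 //.

Qed.

Lemma Up_S n : Up n.+1 = Up n * ('X + 1).
Proof. by rewrite /Up big_ord_recr /= polyC1. Qed.

Lemma u_S k n : (Up n.+1)`_k = (Up n)`_k + (if k is k'.+1 then (Up n)`_k' else 0).
Proof. by rewrite Up_S mulrDr mulr1 coefD coefMX addrC; case: k. Qed.

Lemma u_0 k : (Up 0)`_k = (k == 0)%N%:R.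
Proof. by rewrite /Up big_ord0 coef1. Qed.

Lemma Rp_SS n : Rp n.+2 = Rp n * ('X^2 - 1).
Proof.
rewrite /Rp !big_ord_recr /= -mulrA; congr (_ * _).
rewrite [X in _ * ('X + X%:P)]exprS mulN1r polyCN.
set S := (((-1) ^+ n.+1 : rat)%:P).
have hs : S ^+ 2 = 1 by rewrite /S -rmorphXn /= sqrr_sign.
have -> : ('X + S) * ('X - S) = 'X^2 - S ^+ 2 by ring.
by rewrite hs.
Qed.

Lemma v_SS k n : (Rp n.+2)`_k = (if k is k'.+2 then (Rp n)`_k' else 0) - (Rp n)`_k.
Proof. by rewrite Rp_SS mulrBr mulr1 coefB coefMXn; case: k => [|[|k]] //=; rewrite ?subSS ?subn0. Qed.

Lemma v_0 k : (Rp 0)`_k = (k == 0)%N%:R.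
Proof. by rewrite /Rp big_ord0 coef1. Qed.

Lemma Rp_1 : Rp 1 = 'X - 1.
Proof. by rewrite /Rp big_ord1 /= expr1 polyCN polyC1. Qed.

Definition uu k : fps := fun n => (Up n)`_k.
Definition vv k : fps := fun n => (Rp n)`_k.

Lemma U_step N k : eqm N (Tr N (uu k.+1) * (1 - 'X)) ('X * Tr N (uu k)).
Proof.
move=> j hj; rewrite mulrBr mulr1 coefB coefMX coefXM; case: j hj => [|j] hj /=.
  by rewrite Tr_coef // /uu u_0 /= subr0.
rewrite !Tr_coef /uu ?u_S; try lia.
ring.
Qed.

Lemma U_base N : eqm N (Tr N (uu 0) * (1 - 'X)) 1.
Proof.
move=> j hj; rewrite mulrBr mulr1 coefB coefMX coef1; case: j hj => [|j] hj /=.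
  by rewrite Tr_coef // /uu u_0 /= subr0.
rewrite !Tr_coef /uu ?u_S; try lia.
ring.
Qed.

Lemma U_closed N k : eqm N (Tr N (uu k) * (1 - 'X)^+k.+1) ('X^k).
Proof.
elim: k => [|k IH]; first by rewrite expr1 expr0; exact: U_base.
rewrite exprS mulrA.
refine (eqm_trans (eqm_mul (@U_step N k) (@eqm_refl N _)) _).
rewrite -mulrA [X in eqm _ _ X]exprS.
exact: eqm_mul (@eqm_refl N 'X) IH.
Qed.

Lemma V_step N k : eqm N (Tr N (vv k.+2) * (1 + 'X^2)) ('X^2 * Tr N (vv k)).
Proof.
move=> j hj; rewrite mulrDr mulr1 coefD coefMXn coefXnM.
case: j hj => [|[|j]] hj /=.
- by rewrite Tr_coef // /vv v_0 addr0.
- by rewrite Tr_coef // /vv Rp_1 addr0 coefB coefX coef1 subr0.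
rewrite !Tr_coef /vv ?v_SS ?subSS ?subn0; try lia.
ring.
Qed.

Lemma V0 N : eqm N (Tr N (vv 0) * (1 + 'X^2)) (1 - 'X).
Proof.
move=> j hj; rewrite mulrDr mulr1 coefD coefMXn coefB coefX coef1.
case: j hj => [|[|j]] hj /=.
- by rewrite Tr_coef // /vv v_0 addr0.
- by rewrite Tr_coef // /vv Rp_1 addr0 coefB coefX coef1 /= add0r.
rewrite !Tr_coef /vv ?v_SS ?subSS ?subn0; try lia.
ring.
Qed.

Lemma V1 N : eqm N (Tr N (vv 1) * (1 + 'X^2)) 'X.
Proof.
move=> j hj; rewrite mulrDr mulr1 coefD coefMXn coefX.
case: j hj => [|[|j]] hj /=.
- by rewrite Tr_coef // /vv v_0 addr0.
- by rewrite Tr_coef // /vv Rp_1 addr0 coefB coefX coef1 subr0.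
rewrite !Tr_coef /vv ?v_SS ?subSS ?subn0; try lia.
ring.
Qed.

Lemma V_even N l : eqm N (Tr N (vv l.*2) * (1 + 'X^2)^+l.+1) ('X^(l.*2) * (1 - 'X)).
Proof.
elim: l => [|l IH]; first by rewrite expr1 mul1r; exact: V0.
rewrite [(1 + 'X^2) ^+ _]exprS mulrA doubleS.
refine (eqm_trans (eqm_mul (@V_step N _) (@eqm_refl N _)) _).
have -> : 'X^((l.*2).+2) = 'X^2 * 'X^(l.*2) :> {poly rat} by rewrite -exprD add2n.
rewrite -!mulrA.
exact (eqm_mul (@eqm_refl N 'X) (eqm_mul (@eqm_refl N 'X) IH)).
Qed.

Lemma V_odd N l : eqm N (Tr N (vv l.*2.+1) * (1 + 'X^2)^+l.+1) ('X^(l.*2.+1)).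
Proof.
elim: l => [|l IH]; first by rewrite expr1; exact: V1.
rewrite [(1 + 'X^2) ^+ _]exprS mulrA doubleS.
refine (eqm_trans (eqm_mul (@V_step N _) (@eqm_refl N _)) _).
have -> : 'X^((l.*2).+3) = 'X^2 * 'X^((l.*2).+1) :> {poly rat} by rewrite -exprD add2n.
rewrite -!mulrA.
exact (eqm_mul (@eqm_refl N 'X) (eqm_mul (@eqm_refl N 'X) IH)).
Qed.

Lemma Los_gt_aux n : (forall k, (n < k)%N -> Los n k = 0%N) /\
                     (forall k, (n.+1 < k)%N -> Los n.+1 k = 0%N).
Proof.
elim: n => [|n [IH1 IH2]].
  by split => k; case: k => [|[|k]].
split; first exact: IH2.
move=> k; case: k => [|[|k]] hk //=.
rewrite IH1 ?bin_small ?IH1 //; lia.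
Qed.

Lemma Los_gt n k : (n < k)%N -> Los n k = 0%N.
Proof. exact: (Los_gt_aux n).1. Qed.

Lemma coef_LosPoly n k : (LosPoly n)`_k = (Los n k)%:R.
Proof.
rewrite /LosPoly -(poly_def _ (fun i => (Los n i)%:R)) coef_poly; case: ltnP => h //.
by rewrite Los_gt.
Qed.

Lemma Up_coef n k : (Up n)`_k = ('C(n, k))%:R.
Proof.
elim: n k => [|n IH] k; first by rewrite u_0 bin0n.
rewrite u_S; case: k => [|k]; first by rewrite !IH !bin0 addr0.
by rewrite !IH binS natrD addrC.
Qed.

Lemma Up_eq n : Up n = ('X + 1)^+n.
Proof. by rewrite /Up prodr_const card_ord polyC1. Qed.

Lemma Los_rec n : LosPoly n.+2 = (1 + 'X^2) * LosPoly n + 'X * Up n.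
Proof.
apply/polyP => k; rewrite coefD mulrDl mul1r coefD coefXnM coefXM !coef_LosPoly Up_coef /=.
case: k => [|[|k]] /=; rewrite ?natrD ?addr0 ?add0r ?addn0 //.
by rewrite ?subSS ?subn0 addrAC.
Qed.

Definition Qp n : {poly rat} := (1 + 'X^2)^+(n./2) * (if odd n then 'X + 1 else 1).

Lemma Los_closed_aux n : (2%:R * LosPoly n = Up n + Qp n) /\
                         (2%:R * LosPoly n.+1 = Up n.+1 + Qp n.+1).
Proof.
elim: n => [|n [IH1 IH2]].
  have L0 : LosPoly 0 = 1 by apply/polyP => k; rewrite coef_LosPoly coef1; case: k.
  have L1 : LosPoly 1 = 1 + 'X.
    by apply/polyP => k; rewrite coef_LosPoly coefD coef1 coefX; case: k => [|[|k]].
  rewrite /Qp L0 L1 /= !Up_eq expr0 expr1 !mulr1; split.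
- ring.
- ring.
split; first exact: IH2.
rewrite Los_rec.
transitivity ((1 + 'X^2) * (2%:R * LosPoly n) + 2%:R * 'X * Up n); first by ring.
rewrite IH1 !Up_S /Qp /= negbK [(1 + 'X^2) ^+ (n./2).+1]exprS.
ring.
Qed.

Lemma Los_comp n : 2%:R * (LosPoly n \Po - 'X) =
  (1 - 'X)^+n + (1 + 'X^2)^+(n./2) * (if odd n then 1 - 'X else 1).
Proof.
rewrite -(rmorph_nat (comp_poly (- 'X))) -rmorphM (Los_closed_aux n).1.
rewrite rmorphD Up_eq /Qp rmorphM !rmorphXn /= rmorphD /= comp_polyX rmorph1.
have e1 : (1 + 'X^2) \Po - 'X = 1 + 'X^2 :> {poly rat}.
  by rewrite rmorphD rmorph1 rmorphXn /= comp_polyX sqrrN.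
rewrite e1; congr (_ + _); first by rewrite addrC.
congr (_ * _).
by case: (odd n); rewrite ?rmorph1 // rmorphD rmorph1 /= comp_polyX addrC.
Qed.

Definition cc : {poly rat} := (2^-1 : rat)%:P.

Lemma cc2 : cc * 2%:R = 1.
Proof. by rewrite /cc -(rmorph_nat (@polyC rat)) -rmorphM mulVf. Qed.

Lemma key k N : eqm N ('X^k * (LosPoly k.+2 \Po (- 'X)))
  (cc * (Tr N (uu k) + Tr N (vv k)) * (1 - 'X) ^+ (2 * ((k + 1) %/ 2) + 1)%N
     * (1 + 'X ^+ 2) ^+ (k %/ 2 + 1)%N).
Proof.
have [l [-> | ->]] : exists l, k = l.*2 \/ k = l.*2.+1.
  exists k./2; rewrite -{1 3}(odd_double_half k); case: (odd k); [right|left] => //.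
- have -> : (2 * ((l.*2 + 1) %/ 2) + 1)%N = (l.*2).+1 by lia.
  have -> : (l.*2 %/ 2 + 1)%N = l.+1 by lia.
  have hU := @U_closed N l.*2.
  have hV := @V_even N l.
  set TU := Tr N (uu l.*2) in hU *; set TV := Tr N (vv l.*2) in hV *.
  set A := (1 - 'X) ^+ (l.*2).+1 in hU *; set B := (1 + 'X ^+ 2) ^+ l.+1 in hV *.
  have -> : cc * (TU + TV) * A * B = cc * ((TU * A) * B + (TV * B) * A) by ring.
  apply: eqm_sym.
  refine (eqm_trans (eqm_mul (@eqm_refl N cc) (eqm_add (eqm_mul hU (@eqm_refl N B)) (eqm_mul hV (@eqm_refl N A)))) _).
  apply: eqm_eq.
  have h2 := Los_comp (l.*2).+2.
  rewrite /= half_double odd_double /= mulr1 -/B in h2.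
  have -> : LosPoly (l.*2).+2 \Po - 'X = cc * (2%:R * (LosPoly (l.*2).+2 \Po - 'X)).
    by rewrite mulrA cc2 mul1r.
  rewrite h2 [(1 - 'X) ^+ _]exprS -/A.
  ring.
- have -> : (2 * ((l.*2.+1 + 1) %/ 2) + 1)%N = (l.*2).+3 by lia.
  have -> : (l.*2.+1 %/ 2 + 1)%N = l.+1 by lia.
  have hU := @U_closed N l.*2.+1.
  have hV := @V_odd N l.
  set TU := Tr N (uu l.*2.+1) in hU *; set TV := Tr N (vv l.*2.+1) in hV *.
  set A := (1 - 'X) ^+ (l.*2).+2 in hU *; set B := (1 + 'X ^+ 2) ^+ l.+1 in hV *.
  rewrite [(1 - 'X) ^+ (l.*2).+3]exprS -/A.
  have -> : cc * (TU + TV) * ((1 - 'X) * A) * B = cc * ((TU * A) * ((1 - 'X) * B) + (TV * B) * ((1 - 'X) * A)) by ring.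
  apply: eqm_sym.
  refine (eqm_trans (eqm_mul (@eqm_refl N cc) (eqm_add (eqm_mul hU (@eqm_refl N _)) (eqm_mul hV (@eqm_refl N _)))) _).
  apply: eqm_eq.
  have h2 := Los_comp (l.*2).+3.
  rewrite /= uphalf_double odd_double /= -/B in h2.
  have -> : LosPoly (l.*2).+3 \Po - 'X = cc * (2%:R * (LosPoly (l.*2).+3 \Po - 'X)).
    by rewrite mulrA cc2 mul1r.
  rewrite h2 [(1 - 'X) ^+ (l.*2).+3]exprS -/A.
  ring.
Qed.

Lemma coef0X (p : {poly rat}) m : (p ^+ m)`_0 = p`_0 ^+ m.
Proof. by elim: m => [|m IH]; rewrite ?expr0 ?coef1 // !exprS coef0M IH. Qed.

Theorem proposition3p4 (k : nat) :
  (fun n : nat => ((e_even n (n%:Z - k%:Z))%:R : rat)) =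
  fps_mul
    (fps_of_poly ('X^k * (LosPoly k.+2 \Po (- 'X))))
    (fps_mul
       (fps_inv (fps_of_poly ((1 - 'X) ^+ (2 * ((k + 1) %/ 2) + 1)%N)))
       (fps_inv (fps_of_poly ((1 + 'X ^+ 2) ^+ (k %/ 2 + 1)%N)))).
Proof.
apply: functional_extensionality => n.
have hP := @key k n.
set P := 'X^k * _ in hP *.
set A := (1 - 'X) ^+ _ in hP *.
set B := (1 + 'X ^+ 2) ^+ _ in hP *.
set L := (fun m : nat => ((e_even m (m%:Z - k%:Z))%:R : rat)).
have hTL : Tr n L = cc * (Tr n (uu k) + Tr n (vv k)).
  apply/polyP => j; rewrite coefCM coefD !coef_poly.
  case: ifP => _; last by rewrite addr0 mulr0.
  by rewrite /L lhs_formula.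
have hA : eqm n (A * Tr n (fps_inv (fps_of_poly A))) 1.
  apply: inv_eqm; rewrite /A coef0X coefB coef1 coefX subr0 expr1n; exact: oner_neq0.
have hB : eqm n (B * Tr n (fps_inv (fps_of_poly B))) 1.
  apply: inv_eqm; rewrite /B coef0X coefD coef1 coefXn addr0 expr1n; exact: oner_neq0.
transitivity ((Tr n L)`_n); first by rewrite Tr_coef.
rewrite (@fps_mulT n) //.
suff H : eqm n (Tr n (fps_of_poly P) *
  Tr n (fps_mul (fps_inv (fps_of_poly A)) (fps_inv (fps_of_poly B)))) (Tr n L).
  by rewrite H.
set Ia := Tr n (fps_inv (fps_of_poly A)) in hA *.
set Ib := Tr n (fps_inv (fps_of_poly B)) in hB *.
refine (eqm_trans (eqm_mul (@Tr_poly n P) (@Tr_mul n _ _)) _).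
refine (eqm_trans (eqm_mul hP (@eqm_refl n (Tr n _ * Tr n _))) _).
rewrite -/Ia -/Ib.
have -> : cc * (Tr n (uu k) + Tr n (vv k)) * A * B * (Ia * Ib) =
          cc * (Tr n (uu k) + Tr n (vv k)) * (A * Ia) * (B * Ib) by ring.
refine (eqm_trans (eqm_mul (eqm_mul (@eqm_refl n _) hA) hB) _).
by rewrite !mulr1 hTL.
Qed.
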